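(* Let $u\in A^{\mathbb{N}}$ and $x\in\mathbb{P}\mathbb{R}_+^d$. If the worm $W(u)$ has non-empty interior for the topology $\mathcal{T}_x$, then $\pi_x(W(u))$ is bounded.
   Context: $A=\{0,\dots,d\}$, $h(y)=\sum_iy_i$, $P=\{h=0\}\subseteq\mathbb{R}^{d+1}$. $\mathbb{P}\mathbb{R}_+^d$ is the set of positive directions, $v(x)$ the $\ell^1$-normalized representative, $\pi_x(z)=z-h(z)v(x)$. $\mathbb{H}=\{z\in\mathbb{Z}^{d+1}:h(z)\ge0\}$; $\mathcal{T}_x$ is the topology on $\mathbb{H}$ whose open sets are $\pi_x^{-1}(U)\cap\mathbb{H}$ with $U\subseteq P$ open. $W(u)=\{\mathrm{ab}(p):p\text{ finite prefix of }u\}$, $\mathrm{ab}(p)$ counting letters. *)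

(* Defs.v *)
From HB Require Import structures.
From mathcomp Require Import all_boot all_order all_algebra.
From mathcomp Require Import reals.
Set Implicit Arguments. Unset Strict Implicit. Unset Printing Implicit Defensive.
Import Order.TTheory GRing.Theory Num.Theory.
Local Open Scope ring_scope.

(* Alphabet A = {0,...,d} is 'I_d.+1; vectors of R^{d+1} are functions 'I_d.+1 -> R,
   vectors of Z^{d+1} are functions 'I_d.+1 -> int. *)

Section Defs.
Variables (R : realType) (d : nat).

Definition hR (y : 'I_d.+1 -> R) : R := \sum_i y i.
Definition hZ (z : 'I_d.+1 -> int) : int := \sum_i z i.

(* v is the l^1-normalized representative of a positive direction x in PR_+^d *)
Definition pos_dir_rep (v : 'I_d.+1 -> R) : Prop :=
  (forall i, 0 < v i) /\ hR v = 1.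

Definition projx (v : 'I_d.+1 -> R) (y : 'I_d.+1 -> R) : 'I_d.+1 -> R :=
  fun i => y i - hR y * v i.

Definition toR (z : 'I_d.+1 -> int) : 'I_d.+1 -> R := fun i => (z i)%:~R.

Definition inP (y : 'I_d.+1 -> R) : Prop := hR y = 0.

(* U is an open subset of P (subspace topology of R^{d+1}, sup-norm balls) *)
Definition openP (U : ('I_d.+1 -> R) -> Prop) : Prop :=
  (forall y, U y -> inP y) /\
  forall y, U y -> exists e : R, 0 < e /\
    forall p, inP p -> (forall i, `|p i - y i| < e) -> U p.

Definition inH (z : 'I_d.+1 -> int) : Prop := 0 <= hZ z.

Definition Tx_open (v : 'I_d.+1 -> R) (O : ('I_d.+1 -> int) -> Prop) : Prop :=
  exists U, openP U /\ forall z, O z <-> (inH z /\ U (projx v (toR z))).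

Definition Tx_nonempty_interior (v : 'I_d.+1 -> R) (S : ('I_d.+1 -> int) -> Prop) : Prop :=
  exists O, Tx_open v O /\ (exists z, O z) /\ (forall z, O z -> S z).

(* ab(p) for the prefix of length n of u *)
Definition ab (u : nat -> 'I_d.+1) (n : nat) : 'I_d.+1 -> int :=
  fun i => (count (fun k => u k == i) (iota 0 n))%:Z.

Definition worm (u : nat -> 'I_d.+1) (z : 'I_d.+1 -> int) : Prop :=
  exists n, z = ab u n.

Definition boundedR (S : ('I_d.+1 -> R) -> Prop) : Prop :=
  exists M : R, forall y, S y -> forall i, `|y i| <= M.

Definition proj_image (v : 'I_d.+1 -> R) (S : ('I_d.+1 -> int) -> Prop)
  (y : 'I_d.+1 -> R) : Prop :=
  exists z, S z /\ y = projx v (toR z).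

End Defs.

(* Main.v *)
Require Import Defs.
From mathcomp Require Import all_boot all_order all_algebra.
From mathcomp Require Import reals.
From mathcomp Require Import ring lra zify.
From Stdlib Require Import Classical.
Set Implicit Arguments. Unset Strict Implicit. Unset Printing Implicit Defensive.
Import Order.TTheory GRing.Theory Num.Theory.
Local Open Scope ring_scope.

Lemma abS d (u : nat -> 'I_d.+1) n i :
  ab u n.+1 i = ab u n i + (u n == i)%:R.
Proof.
rewrite /ab -[n.+1]addn1 iotaD count_cat /= add0n addn0 PoszD.
by case: (u n == i).
Qed.

Lemma ab0 d (u : nat -> 'I_d.+1) i : ab u 0 i = 0.
Proof. by []. Qed.

Lemma hZ_ab d (u : nat -> 'I_d.+1) n : hZ (ab u n) = n%:Z.
Proof.
elim: n => [|n IH]; first by rewrite /hZ big1.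
rewrite /hZ (eq_bigr (fun i => ab u n i + (u n == i)%:R)); last by move=> i _; rewrite abS.
rewrite big_split /= -/(hZ (ab u n)) IH (bigD1 (u n)) //= eqxx big1 ?addr0.
  by rewrite -PoszD addn1.
by move=> i /negPf; rewrite eq_sym => ->.
Qed.

Lemma ab_le d (u : nat -> 'I_d.+1) n m i :
  0 <= ab u (n + m) i - ab u n i <= m%:Z.
Proof.
elim: m => [|m IH]; first by rewrite addn0 subrr.
rewrite addnS abS; move: IH => /andP[h1 h2].
rewrite addrAC; apply/andP; split.
  by apply: addr_ge0 => //; case: (u _ == i).
rewrite -(addn1 m) PoszD; apply: lerD => //; by case: (u _ == i).
Qed.
Lemma fin_return (T : finType) (g : nat -> T) :
  exists G, forall t, exists m, (m <= G)%N /\ (m <= t)%N /\ g m = g t.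
Proof.
suff H : forall s : seq T, exists G, forall t, g t \in s ->
  exists m, (m <= G)%N /\ (m <= t)%N /\ g m = g t.
  have [G HG] := H (enum T); exists G => t; apply: HG; by rewrite mem_enum.
elim=> [|c s [G IH]]; first by exists 0%N.
case: (classic (exists t, g t == c)) => [ex|nex].
  case: (ex_minnP ex) => m0 /eqP gm0 min0.
  exists (maxn G m0) => t; rewrite inE => /orP[/eqP gt|gs].
    exists m0; split; first exact: leq_maxr.
    by split; [apply: min0; apply/eqP | rewrite gm0].
  have [m [h1 [h2 h3]]] := IH t gs.
  by exists m; split => //; apply: leq_trans h1 (leq_maxl _ _).
exists G => t; rewrite inE => /orP[/eqP gt|gs].
  by exfalso; apply: nex; exists t; apply/eqP.
exact: IH.
Qed.

Section S.
Variables (R : realType) (d : nat) (u : nat -> 'I_d.+1) (v : 'I_d.+1 -> R).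
Hypothesis hv : pos_dir_rep v.

Definition PP k i : R := (ab u k i)%:~R - k%:R * v i.

Lemma hR_toR z : hR (@toR R d z) = (hZ z)%:~R.
Proof. by rewrite /hR /hZ rmorph_sum. Qed.

Lemma projx_ab k i : projx v (@toR R d (ab u k)) i = PP k i.
Proof. by rewrite /projx hR_toR hZ_ab. Qed.

Lemma v_le1 i : v i <= 1.
Proof.
case: hv => hp <-; rewrite /hR (bigD1 i) //= lerDl.
by apply: sumr_ge0 => j _; apply: ltW.
Qed.

Lemma PPdiff n m i : `|PP (n + m) i - PP n i| <= 2 * m%:R.
Proof.
have /andP[h1 h2] := ab_le u n m i.
have e : PP (n + m) i - PP n i = (ab u (n + m) i - ab u n i)%:~R - m%:R * v i.
  by rewrite /PP intrB natrD; ring.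
rewrite e; set a := (_ - _)%:~R.
have a0 : 0 <= a by rewrite /a ler0z.
have am : a <= m%:R by rewrite /a -[m%:R]/((m%:Z)%:~R) ler_int.
have v0 : 0 < v i by case: hv.
have v1 := v_le1 i.
have m0 : 0 <= m%:R :> R by [].
have b0 : 0 <= m%:R * v i by rewrite mulr_ge0 // ltW.
have b1 : m%:R * v i <= m%:R by apply: ler_piMr.
rewrite ler_norml; apply/andP; split; lra.
Qed.
End S.

Section S.
Variable (R : realType).

Definition frac (x : R) : R := x - (Num.floor x)%:~R.

Lemma frac_itv x : 0 <= frac x < 1.
Proof.
rewrite /frac; have := floor_itv x; move=> /andP[h1 h2].
rewrite intrD in h2; apply/andP; split; lra.
Qed.

Definition cellf (K : nat) (x : R) : 'I_K.+1 := inord `|Num.floor (K%:R * frac x)|%N.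

Lemma cellf_close K x y : (0 < K)%N -> cellf K x = cellf K y ->
  `|frac x - frac y| < K%:R^-1.
Proof.
move=> K0 e.
have K0' : 0 < K%:R :> R by rewrite ltr0n.
have bnd z : (0 <= Num.floor (K%:R * frac z)) && (Num.floor (K%:R * frac z) < K%:Z).
  have /andP[f0 f1] := frac_itv z.
  rewrite floor_ge0 mulr_ge0 ?ler0n //= floor_lt_int.
  by rewrite -[X in _ < X]mulr1 pmulrn ltr_pM2l.
have := bnd x; have := bnd y; move: e; rewrite /cellf.
set a := Num.floor (K%:R * frac x); set b := Num.floor (K%:R * frac y).
move=> e /andP[b0 bK] /andP[a0 aK].
have ab : a = b.
  have := congr1 val e; rewrite /= !inordK; lia.
have ha := floor_itv (K%:R * frac x); have hb := floor_itv (K%:R * frac y).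
rewrite -/a -/b -ab intrD in ha hb.
have h : `|K%:R * frac x - K%:R * frac y| < 1.
  rewrite ltr_norml; apply/andP; split; lra.
rewrite -mulrBr normrM ger0_norm ?ltW // in h.
by rewrite -[K%:R^-1]mul1r ltr_pdivlMr // mulrC.
Qed.

Variables (d : nat) (v : 'I_d.+1 -> R).
Hypothesis hv : pos_dir_rep v.

Lemma approx K t m : (d.+1 <= K)%N -> (m <= t)%N ->
  (forall i, cellf K (t%:R * v i) = cellf K (m%:R * v i)) ->
  exists p : 'I_d.+1 -> int, (hZ p = Posz (t - m)%N) /\
    (forall i, `|(p i)%:~R - (t - m)%:R * v i| < K%:R^-1).
Proof.
move=> dK mt hc.
have K0 : (0 < K)%N by apply: leq_trans dK.
have K0' : 0 < K%:R :> R by rewrite ltr0n.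
pose E i := frac (t%:R * v i) - frac (m%:R * v i).
have hE i : `|E i| < K%:R^-1 by apply: cellf_close.
exists (fun i => Num.floor (t%:R * v i) - Num.floor (m%:R * v i)).
have hp i : (Num.floor (t%:R * v i) - Num.floor (m%:R * v i))%:~R = (t - m)%:R * v i - E i :> R.
  by rewrite /E /frac natrB // intrB; ring.
split; last first.
  move=> i; rewrite hp; have -> : forall a b : R, a - b - a = - b by move=> *; ring.
  by rewrite normrN hE.
set z := hZ _.
have hz : (z%:~R : R) = (t - m)%:R - \sum_i E i.
  rewrite /z /hZ rmorph_sum (eq_bigr _ (fun i _ => hp i)) sumrB -mulr_sumr.
  by case: hv => _; rewrite /hR => ->; rewrite mulr1.
have hs : `|\sum_i E i| < 1.
  apply: le_lt_trans (ler_norm_sum _ _ _) _.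
  apply: (@lt_le_trans _ _ (\sum_(i < d.+1) K%:R^-1)).
    apply: ltr_sum; last by move=> i _; exact: hE.
    by apply/hasP; exists ord0; rewrite ?mem_index_enum.
  rewrite sumr_const card_ord -(mulr_natl (K%:R^-1)) ler_pdivrMr // mul1r ler_nat //.
have : `|(z - (t - m)%N%:Z)%:~R : R| < 1.
  rewrite intrB hz /=; have -> : forall a b : R, a - b - a = - b by move=> *; ring.
  by rewrite normrN.
rewrite -intr_norm ltrz1; lia.
Qed.
End S.

Lemma inP_projx (R : realType) d (v : 'I_d.+1 -> R) y :
  hR v = 1 -> inP (projx v y).
Proof.
move=> hs; rewrite /inP /hR /projx sumrB -mulr_sumr -/(hR v) hs mulr1 -/(hR y).
by rewrite subrr.
Qed.

Theorem lemma3p15 (R : realType) (d : nat) (u : nat -> 'I_d.+1)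
  (v : 'I_d.+1 -> R) :
  pos_dir_rep v ->
  Tx_nonempty_interior v (worm u) ->
  boundedR (proj_image v (worm u)).
Proof.
move=> hv [O [[U [[UP Uopen] HO]] [[z0 Oz0] Osub]]].
have [hpos hsum] := hv.
have [N eN] := Osub z0 Oz0.
have [_ Uc] := (HO z0).1 Oz0.
have [e [e0 He]] := Uopen _ Uc.
pose K := (Num.bound e^-1 + d).+1.
have dK : (d < K)%N by rewrite /K ltnS leq_addl.
have K0' : 0 < K%:R :> R by rewrite ltr0n.
have Ke : K%:R^-1 < e.
  have ie : 0 <= e^-1 by rewrite invr_ge0 ltW.
  have h1 := archi_boundP ie.
  have h2 : (Num.bound e^-1)%:R <= K%:R :> R by rewrite ler_nat /K; lia.
  rewrite -[e]invrK ltf_pV2 ?posrE ?invr_gt0 //; exact: lt_le_trans h1 h2.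
pose g t := [ffun i => cellf K (t%:R * v i)].
have [G HG] := fin_return g.
have near t : exists m, (m <= G)%N /\ (m <= t)%N /\
    forall i, `|PP u v (N + t - m)%N i - PP u v N i| < e.
  have [m [mG [mt gm]]] := HG t.
  exists m; split => //; split => //.
  have hc i : cellf K (t%:R * v i) = cellf K (m%:R * v i).
    by have := congr1 (fun f : {ffun 'I_d.+1 -> 'I_K.+1} => f i) (esym gm); rewrite /g !ffunE.
  have [p [hp hpi]] := approx hv dK mt hc.
  pose z := fun i => ab u N i + p i.
  have hz : hZ z = (N + (t - m))%N.
    by rewrite /hZ /z big_split /= -/(hZ (ab u N)) -/(hZ p) hZ_ab hp.
  have close i : `|projx v (toR R z) i - projx v (toR R z0) i| < e.
    rewrite eN projx_ab /projx hR_toR hz /toR /z /PP intrD.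
    rewrite -pmulrn natrD.
    have -> : forall a b c w x : R, a + b - (c + w) * x - (a - c * x) = b - w * x.
      by move=> *; ring.
    exact: lt_trans (hpi i) Ke.
  have Oz : O z.
    apply/(HO z); split; first by rewrite /inH hz.
    exact: (He _ (inP_projx _ hsum)).
  have [n' en'] := Osub z Oz.
  have : hZ z = hZ (ab u n') by rewrite en'.
  rewrite hz hZ_ab => /eqP; rewrite eqz_nat => /eqP en.
  move=> i; rewrite -addnBA // en -!projx_ab -en' -eN.
  exact: close.
pose S := \sum_j `|PP u v N j|.
have S_ge j : `|PP u v N j| <= S.
  rewrite /S (bigD1 j) //= lerDl; exact: sumr_ge0.
exists (2 * (N + G)%:R + e + S).
move=> y [z [[k ->] ->]] i; rewrite projx_ab.
have S0 : 0 <= S by apply: le_trans (S_ge i).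
case: (ltnP k (N + G)) => hk.
  have P0 : PP u v 0 i = 0 by rewrite /PP mul0r subr0.
  have := PPdiff u hv 0 k i; rewrite add0n P0 subr0 => h.
  have h2 : k%:R <= (N + G)%:R :> R by rewrite ler_nat ltnW.
  move: h; rewrite !ler_norml => /andP[h h'].
  apply/andP; split; lra.
have [m [mG [mt cl]]] := near (k - N)%N.
have ek : (N + (k - N) - m)%N = (k - m)%N by lia.
rewrite ek in cl.
have := PPdiff u hv (k - m) m i; rewrite subnK; last by lia.
have hm : m%:R <= G%:R :> R by rewrite ler_nat.
have hG : G%:R <= (N + G)%:R :> R by rewrite ler_nat leq_addl.
move: (cl i) (S_ge i); rewrite !ler_norml ltr_norml.
move=> /andP[a1 a2] /andP[b1 b2] /andP[c1 c2].
apply/andP; split; lra.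
Qed.
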